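(* For every complex number $x$ there exists a unital $\mathbb{C}$-algebra automorphism $\tau_x$ of $\tilde{\mathcal{A}}_{conv.}$ which commutes with the left and right actions of $B$ on $\tilde{\mathcal{A}}_{conv.}$ (i.e. $\tau_x(SXT)=S\tau_x(X)T$ for $S,T\in B$, $X\in\tilde{\mathcal{A}}_{conv.}$) and satisfies $$\tau_x(a)=a+xb,\qquad \tau_x(b)=b,\qquad \tau_x(1)=1.$$
   Context: $\widehat{\mathcal{A}}$ is the algebra of formal power series $\sum_{p,q\ge0}\gamma_{p,q}a^pb^q$ in variables $a,b$ with $ab-ba=b^2$ (the $(a,b)$-adic completion of the polynomial algebra with this relation). $\tilde{\mathcal{A}}_{conv.}\subset\widehat{\mathcal{A}}$ is the subalgebra of series with $|\gamma_{p,q}|\le C_RR^{p+q}q!$ for some $R>1$, $C_R>0$. $B=\mathbb{C}\{\{b\}\}\subset\tilde{\mathcal{A}}_{conv.}$ is the subalgebra of series $\sum c_qb^q$ with $|c_q|\le CR^qq!$ for some $C,R$. *)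

(* Defs.v *)
From mathcomp Require Import all_boot all_algebra.
From mathcomp Require Import reals Rstruct complex.
Import GRing.Theory Num.Theory.
Set Implicit Arguments.
Unset Strict Implicit.
Unset Printing Implicit Defensive.
Local Open Scope ring_scope.
Local Open Scope complex_scope.

Definition RR := Rdefinitions.R.
Definition CC := (RR)[i].

(* An element of \hat A = sum_{p,q} gamma_{p,q} a^p b^q (normally ordered:
   powers of a to the left of powers of b) is its coefficient array. *)
Definition series := nat -> nat -> CC.

Definition sadd (X Y : series) : series := fun p q => X p q + Y p q.
Definition sscale (c : CC) (X : series) : series := fun p q => c * X p q.

Definition sone : series := fun p q => if (p == 0%N) && (q == 0%N) then 1 else 0.
Definition sa : series := fun p q => if (p == 1%N) && (q == 0%N) then 1 else 0.
Definition sb : series := fun p q => if (p == 0%N) && (q == 1%N) then 1 else 0.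

Definition rising (q k : nat) : nat := \prod_(i < k) (q + i)%N.

(* From ab - ba = b^2 one gets [a, b^q] = q b^(q+1), and then
   b^q a^r = sum_k (-1)^k 'C(r,k) q(q+1)...(q+k-1) a^(r-k) b^(q+k). *)
Definition reorder_coef (q r k : nat) : CC :=
  (-1) ^+ k * ('C(r, k) * rising q k)%:R.

(* Product in \hat A:
   (a^p b^q)(a^r b^s) = sum_k reorder_coef q r k a^(p+r-k) b^(q+k+s). *)
Definition smul (X Y : series) : series := fun m n =>
  \sum_(k < n.+1) \sum_(p < m.+1) \sum_(q < (n - k).+1)
     X p q * Y (m - p + k)%N (n - k - q)%N * reorder_coef q (m - p + k) k.

Definition conv (X : series) : Prop :=
  exists (R C : RR), 1 < R /\ 0 < C /\
    forall p q : nat, `|X p q| <= (C * R ^+ (p + q) * (q`!)%:R)%:C.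

Definition inB (X : series) : Prop :=
  (forall p q : nat, (0 < p)%N -> X p q = 0) /\
  exists (R C : RR), forall q : nat, `|X 0%N q| <= (C * R ^+ q * (q`!)%:R)%:C.

(* Main.v *)
Require Import Defs.
From mathcomp Require Import all_boot all_algebra.
From mathcomp Require Import reals Rstruct complex.
Import GRing.Theory Num.Theory.
Local Open Scope ring_scope.
From mathcomp Require Import ring zify lra.
Import order.Order.TTheory.

Section Tri.
Variable R : nmodType.

Lemma tri_box M (f : nat -> nat -> R) :
  \sum_(i < M.+1) \sum_(j < (M - i).+1) f i j =
  \sum_(i < M.+1) \sum_(j < M.+1) (if (i + j <= M)%N then f i j else 0).
Proof.
apply: eq_bigr => i _.
rewrite (big_ord_widen M.+1 (fun j => f i j)); last by rewrite ltnS leq_subr.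
rewrite big_mkcond; apply: eq_bigr => j _.
have hi : (i <= M)%N by have := ltn_ord i; rewrite ltnS.
by rewrite ltnS leq_subRL.
Qed.

Lemma tri_swap M (f : nat -> nat -> R) :
  \sum_(i < M.+1) \sum_(j < (M - i).+1) f i j =
  \sum_(j < M.+1) \sum_(i < (M - j).+1) f i j.
Proof.
rewrite (tri_box M f) (tri_box M (fun j i => f i j)) exchange_big; apply: eq_bigr => j _; apply: eq_bigr => i _.
by rewrite addnC.
Qed.

Lemma tri_diag M (f : nat -> nat -> R) :
  \sum_(j < M.+1) \sum_(k < (M - j).+1) f j k =
  \sum_(r < M.+1) \sum_(k < r.+1) f (r - k)%N k.
Proof.
rewrite (tri_swap M f).
transitivity (\sum_(r < M.+1) \sum_(k < M.+1) (if (k <= r)%N then f (r - k)%N k else 0)); last first.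
  apply: eq_bigr => r _.
  rewrite (big_ord_widen M.+1 (fun k => f (r - k)%N k)); last exact: ltn_ord.
  by rewrite [RHS]big_mkcond; apply: eq_bigr => k _; rewrite ltnS.
rewrite [RHS]exchange_big; apply: eq_bigr => k _.
rewrite -(big_mkord xpredT (fun r => if (k <= r)%N then f (r - k)%N k else 0)).
rewrite -(big_mkord xpredT (fun j => f j k)).
have hk : (k <= M.+1)%N by apply: ltnW; exact: ltn_ord.
symmetry; rewrite (@big_cat_nat _ _ _ k 0 M.+1 _ _ (leq0n k) hk) /=.
rewrite [X in X + _]big_nat_cond [X in X + _]big1 ?add0r; last first.
  by move=> i /andP [/andP [_ hi] _]; rewrite leqNgt hi.
rewrite -{1}(add0n k) big_addn subSn ?leq_ord //.
by apply: eq_bigr => i _; rewrite leq_addl addnK.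
Qed.
End Tri.
Arguments tri_box {R}.
Arguments tri_swap {R}.
Arguments tri_diag {R}.

Definition rC (z : CC) (k : nat) : CC := \prod_(i < k) (z + i%:R).
Definition ff (x : CC) (k : nat) : CC := \prod_(i < k) (x - i%:R).

Lemma rC0 z : rC z 0 = 1. Proof. by rewrite /rC big_ord0. Qed.
Lemma rCS z k : rC z k.+1 = z * rC (z + 1) k.
Proof.
rewrite /rC big_ord_recl /= addr0; congr (_ * _); apply: eq_bigr => i _.
by rewrite /bump /= add1n mulrS addrA.
Qed.
Lemma rC_add z j p : rC z (j + p) = rC z j * rC (z + j%:R) p.
Proof.
rewrite /rC big_split_ord /=; congr (_ * _); apply: eq_bigr => i _.
by rewrite /= natrD addrA.
Qed.
Lemma rCSr z k : rC z k.+1 = rC z k * (z + k%:R).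
Proof. by rewrite -addn1 rC_add /rC big_ord1 addr0. Qed.
Lemma rC_nat n k : rC n%:R k = (rising n k)%:R.
Proof. by rewrite /rC /rising natr_prod; apply: eq_bigr => i _; rewrite natrD. Qed.
Lemma ff0 x : ff x 0 = 1. Proof. by rewrite /ff big_ord0. Qed.
Lemma ffS x k : ff x k.+1 = ff x k * (x - k%:R).
Proof. by rewrite /ff big_ord_recr. Qed.

Lemma pascal_sum r (h : nat -> CC) :
  \sum_(k < r.+2) 'C(r.+1, k)%:R * h k =
  \sum_(k < r.+1) 'C(r, k)%:R * (h k + h k.+1).
Proof.
rewrite big_ord_recl /=.
under eq_bigr do rewrite /bump /= add1n binS natrD mulrDl.
rewrite big_split /=.
under [RHS]eq_bigr do rewrite mulrDr.
rewrite big_split /= [X in _ = X + _]big_ord_recl /= addrA; congr (_ + _).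
  congr (_ + _).
    by rewrite !bin0.
  rewrite [LHS]big_ord_recr /= bin_small // mul0r addr0.
  by apply: eq_bigr => i _; rewrite /bump /= add1n.
Qed.

Lemma rc_eq q r k : reorder_coef q r k = 'C(r, k)%:R * ((-1) ^+ k * rC q%:R k).
Proof. by rewrite /reorder_coef natrM rC_nat; ring. Qed.

Lemma F0 q r : forall z : CC,
  \sum_(k < r.+1) reorder_coef q r k * rC (z + q%:R + k%:R) (r - k) = rC z r.
Proof.
elim: r => [|r IH] z.
  by rewrite big_ord1 /reorder_coef bin0 /rising big_ord0 !rC0; ring.
under eq_bigr do rewrite rc_eq -mulrA.
rewrite (pascal_sum r (fun k => (-1) ^+ k * rC q%:R k * rC (z + q%:R + k%:R) (r.+1 - k))).
rewrite rCS -(IH (z + 1)) mulr_sumr; apply: eq_bigr => k _.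
have hk : (k <= r)%N by rewrite -ltnS.
rewrite subSn // subSS rCS rCSr rc_eq exprS.
have -> : z + q%:R + (k.+1)%:R = z + q%:R + k%:R + 1 by rewrite -addn1 natrD addrA.
have -> : z + 1 + q%:R + k%:R = z + q%:R + k%:R + 1 by ring.
ring.
Qed.

Lemma Vdm x P : forall u : CC,
  \sum_(k < P.+1) 'C(P, k)%:R * ff x k * rC (u + k%:R) (P - k) = rC (u + x) P.
Proof.
elim: P => [|P IH] u.
  by rewrite big_ord1 bin0 ff0 !rC0; ring.
under eq_bigr do rewrite -mulrA.
rewrite (pascal_sum P (fun k => ff x k * rC (u + k%:R) (P.+1 - k))).
rewrite rCS (_ : u + x + 1 = u + 1 + x); last by ring.
rewrite -(IH (u + 1)) mulr_sumr; apply: eq_bigr => k _.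
have hk : (k <= P)%N by rewrite -ltnS.
rewrite subSn // subSS rCS ffS.
have -> : u + (k.+1)%:R = u + k%:R + 1 by rewrite -addn1 natrD addrA.
have -> : u + 1 + k%:R = u + k%:R + 1 by ring.
ring.
Qed.

Definition Phi (X : series) (y : CC) (N : nat) : CC :=
  \sum_(p < N.+1) rC (y + (N - p)%:R) p * X p (N - p)%N.
Definition tauF (x : CC) (X : series) : series := fun m n =>
  \sum_(k < n.+1) 'C(m + k, k)%:R * ff x k * X (m + k)%N (n - k)%N.

Lemma Phi_tau x X y N : Phi (tauF x X) y N = Phi X (y + x) N.
Proof.
rewrite /Phi /tauF.
under eq_bigr do rewrite mulr_sumr.
rewrite (tri_diag N (fun p k => rC (y + (N - p)%:R) p *
   ('C(p + k, k)%:R * ff x k * X (p + k)%N (N - p - k)%N))).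
apply: eq_bigr => r _.
have hr : (r <= N)%N by rewrite -ltnS.
rewrite (_ : y + x + (N - r)%:R = y + (N - r)%:R + x); last by ring.
rewrite -Vdm mulr_suml; apply: eq_bigr => k _.
have hk : (k <= r)%N by rewrite -ltnS.
rewrite subnK // (_ : (N - (r - k) - k = N - r)%N); last by lia.
rewrite (_ : (N - (r - k) = N - r + k)%N); last by lia.
rewrite natrD addrA; ring.
Qed.

Definition W (Y : series) (q m n : nat) : CC :=
  \sum_(k < n.+1) reorder_coef q (m + k) k * Y (m + k)%N (n - k)%N.

Lemma smulE X Y m n : smul X Y m n =
  \sum_(p < m.+1) \sum_(q < n.+1) X p q * W Y q (m - p) (n - q).
Proof.
rewrite /smul exchange_big; apply: eq_bigr => p _.
rewrite (tri_swap n (fun k q => X p q * Y (m - p + k)%N (n - k - q)%N *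
   reorder_coef q (m - p + k) k)).
apply: eq_bigr => q _; rewrite /W mulr_sumr; apply: eq_bigr => k _.
by rewrite subnAC; ring.
Qed.

Lemma tri_shift L (g : nat -> nat -> CC) :
  \sum_(m < L.+1) \sum_(p < m.+1) g m p =
  \sum_(p < L.+1) \sum_(j < (L - p).+1) g (p + j)%N p.
Proof.
have H := tri_diag L (fun j k => g (j + k)%N k).
rewrite (tri_swap L (fun j k => g (j + k)%N k)) in H.
transitivity (\sum_(r < L.+1) \sum_(k < r.+1) g (r - k + k)%N k).
  apply: eq_bigr => r _; apply: eq_bigr => k _.
  by rewrite subnK // -ltnS.
rewrite -H; apply: eq_bigr => p _; apply: eq_bigr => j _; by rewrite addnC.
Qed.

Lemma W_Phi Y q y M :
  \sum_(j < M.+1) rC (y + q%:R + (M - j)%:R) j * W Y q j (M - j) = Phi Y y M.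
Proof.
rewrite /W /Phi.
under eq_bigr do rewrite mulr_sumr.
rewrite (tri_diag M (fun j k => rC (y + q%:R + (M - j)%:R) j *
   (reorder_coef q (j + k) k * Y (j + k)%N (M - j - k)%N))).
apply: eq_bigr => r _.
have hr : (r <= M)%N by rewrite -ltnS.
rewrite -(F0 q r (y + (M - r)%:R)) mulr_suml; apply: eq_bigr => k _.
have hk : (k <= r)%N by rewrite -ltnS.
rewrite subnK // (_ : (M - (r - k) - k = M - r)%N); last by lia.
rewrite (_ : (M - (r - k) = M - r + k)%N); last by lia.
rewrite natrD (_ : y + q%:R + ((M - r)%:R + k%:R) = y + (M - r)%:R + q%:R + k%:R); [ring | ring].
Qed.

Lemma Phi_smul X Y y L :
  Phi (smul X Y) y L = \sum_(N < L.+1) Phi Y y N * Phi X (y + N%:R) (L - N).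
Proof.
transitivity (\sum_(p < L.+1) \sum_(q < (L - p).+1)
   X p q * rC (y + (L - p)%:R) p * Phi Y y (L - p - q)).
  rewrite {1}/Phi.
  under eq_bigr do rewrite smulE mulr_sumr.
  rewrite (tri_shift L (fun m p => rC (y + (L - m)%:R) m *
     \sum_(q < (L - m).+1) X p q * W Y q (m - p) (L - m - q))).
  apply: eq_bigr => p _.
  have hp : (p <= L)%N by rewrite -ltnS.
  under eq_bigr do rewrite subnDA addKn mulr_sumr.
  rewrite (tri_swap (L - p) (fun j q => rC (y + (L - p - j)%:R) (p + j) *
     (X p q * W Y q j (L - p - j - q)))).
  apply: eq_bigr => q _.
  have hq : (q <= L - p)%N by rewrite -ltnS.
  rewrite -(W_Phi Y q y) mulr_sumr; apply: eq_bigr => j _.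
  have hj : (j <= L - p - q)%N by rewrite -ltnS.
  rewrite addnC rC_add -addrA -natrD subnK; last by lia.
  rewrite (_ : (L - p - j = q + (L - p - q - j))%N); last by lia.
  rewrite (_ : (q + (L - p - q - j) - q = L - p - q - j)%N); last by lia.
  rewrite natrD addrA; ring.
under [RHS]eq_bigr do rewrite [Phi X _ _]/Phi mulr_sumr.
rewrite (tri_swap L (fun N p => Phi Y y N * (rC (y + N%:R + (L - N - p)%:R) p *
   X p (L - N - p)%N))).
apply: eq_bigr => p _.
have hp : (p <= L)%N by rewrite -ltnS.
rewrite (reindex_inj rev_ord_inj) /=; apply: eq_bigr => N _.
have hN : (N <= L - p)%N by rewrite -ltnS.
rewrite subSS (_ : (L - p - (L - p - N) = N)%N); last by lia.
rewrite (_ : (L - N - p = L - p - N)%N); last by lia.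
rewrite -addrA -natrD (_ : (N + (L - p - N) = L - p)%N); last by lia.
ring.
Qed.

Lemma rC_vanish (j i : nat) : (j < i)%N -> rC ((j.+1)%:R - i%:R) i = 0.
Proof.
move=> hji.
have Ei : i = ((i - j.+1) + j.+1)%N by lia.
rewrite Ei rC_add natrD.
rewrite (_ : (j.+1)%:R - ((i - j.+1)%:R + (j.+1)%:R) + (i - j.+1)%:R = 0 :> CC); last by ring.
by rewrite rCS mul0r mulr0.
Qed.

Lemma rC1_neq0 j : rC 1 j != 0.
Proof.
change (rC (1%N)%:R j != 0); rewrite rC_nat pnatr_eq0 -lt0n /rising.
by apply: prodn_gt0 => i; rewrite addn_gt0.
Qed.

Lemma Phi_inj X Y : (forall y N, Phi X y N = Phi Y y N) -> X = Y.
Proof.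
move=> H.
apply: FunctionalExtensionality.functional_extensionality => p.
apply: FunctionalExtensionality.functional_extensionality => q.
suff K : forall N j, (j <= N)%N -> X j (N - j)%N = Y j (N - j)%N.
  by have := K (p + q)%N p (leq_addr q p); rewrite addKn.
move=> N; elim/ltn_ind => j IH hj.
have E := H ((j.+1)%:R - N%:R) N.
move/eqP: E; rewrite -subr_eq0 /Phi -sumrB.
have hj' : (j < N.+1)%N by [].
rewrite (bigD1 (Ordinal hj')) //= big1 ?addr0.
  rewrite -mulrBr (_ : (j.+1)%:R - N%:R + (N - j)%:R = 1 :> CC).
    by rewrite mulf_eq0 (negbTE (rC1_neq0 j)) /= subr_eq0 => /eqP.
  rewrite natrB //; ring.
move=> i /eqP hij.
have hi : (i <= N)%N by rewrite -ltnS.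
case: (ltngtP i j) => hc.
- by rewrite (IH i hc (leq_trans (ltnW hc) hj)) subrr.
- rewrite -mulrBr (_ : (j.+1)%:R - N%:R + (N - i)%:R = (j.+1)%:R - i%:R :> CC).
    by rewrite rC_vanish // mul0r.
  rewrite natrB //; ring.
- by exfalso; apply: hij; apply: val_inj.
Qed.

Lemma tau_mul x X Y : tauF x (smul X Y) = smul (tauF x X) (tauF x Y).
Proof.
apply: Phi_inj => y L.
rewrite Phi_tau !Phi_smul; apply: eq_bigr => N _.
by rewrite !Phi_tau (_ : y + x + N%:R = y + N%:R + x) //; ring.
Qed.

Lemma tau_comp x z X : tauF z (tauF x X) = tauF (x + z) X.
Proof.
apply: Phi_inj => y L.
by rewrite !Phi_tau (_ : y + z + x = y + (x + z)) //; ring.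
Qed.

Lemma tau0 X : tauF 0 X = X.
Proof.
apply: Phi_inj => y L.
by rewrite !Phi_tau addr0.
Qed.

Lemma tau_add x X Y : tauF x (sadd X Y) = sadd (tauF x X) (tauF x Y).
Proof.
apply: FunctionalExtensionality.functional_extensionality => m.
apply: FunctionalExtensionality.functional_extensionality => n.
rewrite /tauF /sadd -big_split; apply: eq_bigr => k _ /=; ring.
Qed.

Lemma tau_scale x c X : tauF x (sscale c X) = sscale c (tauF x X).
Proof.
apply: FunctionalExtensionality.functional_extensionality => m.
apply: FunctionalExtensionality.functional_extensionality => n.
rewrite /tauF /sscale mulr_sumr; apply: eq_bigr => k _ /=; ring.
Qed.

Lemma tau_fix x S : (forall p q, (0 < p)%N -> S p q = 0) -> tauF x S = S.
Proof.
move=> HS.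
apply: FunctionalExtensionality.functional_extensionality => m.
apply: FunctionalExtensionality.functional_extensionality => n.
rewrite /tauF big_ord_recl /= addn0 bin0 ff0 subn0 big1 ?addr0; first ring.
by move=> i _; rewrite HS ?mulr0 // addn_gt0 /bump /= add1n orbT.
Qed.

Lemma tau_sa x : tauF x sa = sadd sa (sscale x sb).
Proof.
apply: FunctionalExtensionality.functional_extensionality => m.
apply: FunctionalExtensionality.functional_extensionality => n.
rewrite /tauF /sadd /sscale /sa /sb.
case: n => [|n].
  rewrite big_ord1 addn0 bin0 ff0 subn0 /=.
  by case: (m == 1%N); case: (m == 0%N) => /=; ring.
rewrite big_ord_recl /= addn0 bin0 ff0 subn0 /=.
rewrite big_ord_recl /= big1; last first.
  move=> i _; rewrite /bump /=.
  by rewrite (_ : (m + (1 + (1 + i)) == 1)%N = false) /= ?mulr0 //; lia.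
rewrite addr0 /bump /= addn1 subSS subn0 ffS ff0.
case: m => [|m] /=.
  case: n => [|n] /=; rewrite ?bin1; ring.
by rewrite andbF; ring.
Qed.

Section ConvSec.
Local Open Scope complex_scope.
Local Open Scope ring_scope.

Lemma bin_le_exp n k : ('C(n, k) <= 2 ^ n)%N.
Proof.
elim: n k => [|n IH] [|k] //=.
- by rewrite bin0 expn_gt0.
- by rewrite binS expnS mul2n -addnn leq_add.
Qed.

Lemma fact_le k n : (k <= n)%N -> (k`! * (n - k)`! <= n`!)%N.
Proof.
move=> hk; rewrite -(bin_fact hk) leq_pmull //.
by rewrite bin_gt0.
Qed.

Lemma ff_bound x (s : RR) k : `|x| = s%:C ->
  `|ff x k| <= ((1 + s)%:C) ^+ k * (k`!)%:R.
Proof.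
move=> hs.
have s0 : 0 <= s by rewrite -ler0c -hs normr_ge0.
rewrite /ff normr_prod.
have -> : ((1 + s)%:C) ^+ k * (k`!)%:R = \prod_(i < k) ((1 + s)%:C * (i.+1)%:R).
  rewrite big_split /= prodr_const card_ord; congr (_ * _).
  rewrite fact_prod natr_prod big_add1 /= big_mkord.
  by apply: eq_bigr => i _.
apply: ler_prod => i _; apply/andP; split; first exact: normr_ge0.
apply: le_trans (ler_normB _ _) _.
rewrite hs normr_nat.
have -> : s%:C + i%:R = (s + i%:R)%:C by rewrite rmorphD rmorph_nat.
have -> : (1 + s)%:C * (i.+1)%:R = ((1 + s) * (i.+1)%:R)%:C by rewrite rmorphM rmorph_nat.
rewrite lecR -addn1 natrD.
have i0 : (0 : RR) <= i%:R by apply: ler0n.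
nra.
Qed.

Lemma conv_tau x X : conv X -> conv (tauF x X).
Proof.
move=> [R [C [R1 [C0 HX]]]].
have [s hs] : exists s : RR, `|x| = s%:C by rewrite normc_def; eexists.
have s0 : 0 <= s by rewrite -ler0c -hs normr_ge0.
set M := 1 + s.
have M1 : 1 <= M by rewrite /M; lra.
have R0 : 0 <= R by lra.
exists (4 * M * R), C; split; first nra.
split; first exact: C0.
move=> m n.
set B : RR := (2 ^ (m + n))%:R * M ^+ n * C * R ^+ (m + n) * (n`!)%:R.
have B0 : 0 <= B.
  by rewrite /B !mulr_ge0 ?ler0n ?exprn_ge0 //; lra.
rewrite /tauF; apply: le_trans (ler_norm_sum _ _ _) _.
apply: (@le_trans _ _ (\sum_(k < n.+1) B%:C)).
  apply: ler_sum => k _.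
  have hk : (k <= n)%N by rewrite -ltnS.
  rewrite !normrM normr_nat.
  have hX := HX (m + k)%N (n - k)%N.
  rewrite (_ : (m + k + (n - k) = m + n)%N) in hX; last by lia.
  have hf := @ff_bound x s k hs.
  apply: le_trans (ler_pM _ _ (ler_pM _ _ (lexx _) hf) hX) _.
  - by rewrite mulr_ge0 ?ler0n ?normr_ge0.
  - exact: normr_ge0.
  - exact: ler0n.
  - exact: normr_ge0.
  have -> : ('C(m + k, k))%:R * ((1 + s)%:C ^+ k * (k`!)%:R) *
      (C * R ^+ (m + n) * (n - k)`!%:R)%:C =
      (('C(m + k, k))%:R * (M ^+ k * (k`!)%:R) * (C * R ^+ (m + n) * (n - k)`!%:R))%:C.
    by rewrite !rmorphM !rmorphXn !rmorph_nat.
  rewrite lecR /B.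
  have E1 : (('C(m + k, k))%:R : RR) <= (2 ^ (m + n))%:R.
    rewrite ler_nat; apply: leq_trans (bin_le_exp _ _) _.
    by rewrite leq_exp2l // leq_add2l.
  have E2 : M ^+ k <= M ^+ n by apply: ler_weXn2l.
  have E3 : ((k`! * (n - k)`!)%N%:R : RR) <= (n`!)%:R by rewrite ler_nat fact_le.
  have Ek0 : (0 : RR) <= M ^+ k by rewrite exprn_ge0 //; lra.
  have CR0 : 0 <= C * R ^+ (m + n) by rewrite mulr_ge0 ?exprn_ge0 //; lra.
  rewrite natrM in E3.
  have F1 := ler_pM (ler0n _ _) Ek0 E1 E2.
  have F2 := ler_pM (mulr_ge0 (ler0n _ _) Ek0) (mulr_ge0 (ler0n _ _) (ler0n _ _)) F1 E3.
  have F3 := ler_wpM2r CR0 F2.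
  rewrite (_ : ('C(m + k, k))%:R * (M ^+ k * (k`!)%:R) * (C * R ^+ (m + n) * ((n - k)`!)%:R) =
       ('C(m + k, k))%:R * M ^+ k * ((k`!)%:R * ((n - k)`!)%:R) * (C * R ^+ (m + n))); last by ring.
  apply: le_trans F3 _.
  by rewrite le_eqVlt; apply/orP; left; apply/eqP; ring.
rewrite sumr_const card_ord -rmorphMn lecR -[B *+ _]mulr_natl.
rewrite /B.
have E1 : ((n.+1 * 2 ^ (m + n))%N%:R : RR) <= (4 ^ (m + n))%:R.
  rewrite ler_nat (_ : 4 = 2 * 2)%N // expnMn leq_mul2r; apply/orP; right.
  apply: leq_trans (ltn_expl _ (isT : (1 < 2)%N)) _.
  by rewrite leq_exp2l // leq_addl.
have E2 : M ^+ n <= M ^+ (m + n) by apply: ler_weXn2l => //; rewrite leq_addl.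
have K0 : 0 <= C * R ^+ (m + n) * (n`!)%:R by rewrite !mulr_ge0 ?ler0n ?exprn_ge0 //; lra.
have Mn0 : (0 : RR) <= M ^+ n by rewrite exprn_ge0 //; lra.
have F := ler_wpM2r K0 (ler_pM (ler0n _ _) Mn0 E1 E2).
rewrite natrM in F.
apply: le_trans (_ : _ <= ((n.+1)%:R * (2 ^ (m + n))%:R) * M ^+ n * (C * R ^+ (m + n) * (n`!)%:R)) _.
  by rewrite le_eqVlt; apply/orP; left; apply/eqP; ring.
apply: le_trans F _.
by rewrite le_eqVlt; apply/orP; left; apply/eqP; rewrite !exprMn natrX; ring.
Qed.

End ConvSec.

Theorem proposition1p2p1 :
  forall x : CC, exists tau : series -> series,
    (* tau maps \tilde A_conv into itself, bijectively *)
    (forall X, conv X -> conv (tau X)) /\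
    (forall X Y, conv X -> conv Y -> tau X = tau Y -> X = Y) /\
    (forall Y, conv Y -> exists X, conv X /\ tau X = Y) /\
    (* C-linear *)
    (forall X Y, conv X -> conv Y -> tau (sadd X Y) = sadd (tau X) (tau Y)) /\
    (forall (c : CC) X, conv X -> tau (sscale c X) = sscale c (tau X)) /\
    (* multiplicative and unital *)
    (forall X Y, conv X -> conv Y -> tau (smul X Y) = smul (tau X) (tau Y)) /\
    tau sone = sone /\
    (* commutes with the left and right B-actions *)
    (forall S T X, inB S -> inB T -> conv X ->
        tau (smul (smul S X) T) = smul (smul S (tau X)) T) /\
    (* values on generators *)
    tau sa = sadd sa (sscale x sb) /\
    tau sb = sb.
Proof.
move=> x; exists (tauF x).
have tinv : forall X, tauF (-x) (tauF x X) = X.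
  by move=> X; rewrite tau_comp addrN tau0.
split; first exact: conv_tau.
split.
  by move=> X Y _ _ H; rewrite -(tinv X) H tinv.
split.
  move=> Y hY; exists (tauF (-x) Y); split; first exact: conv_tau.
  by rewrite tau_comp addNr tau0.
split; first by move=> X Y _ _; exact: tau_add.
split; first by move=> c X _; exact: tau_scale.
split; first by move=> X Y _ _; exact: tau_mul.
split.
  by apply: tau_fix => p q hp; case: p hp.
split.
  by move=> S T X [hS _] [hT _] _; rewrite !tau_mul (@tau_fix x S hS) (@tau_fix x T hT).
split; first exact: tau_sa.
by apply: tau_fix => p q hp; case: p hp.
Qed.
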